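(* Let $q\geq 3$ be odd. The function $h\colon(0,1]\to\mathbb{C}$, $h(x)=1/x$, satisfies $\mathcal{P}_q h=h$, i.e. it is a real analytic eigenfunction of the Perron–Frobenius operator $\mathcal{P}_q$ with eigenvalue $1$.
   Context: Let $q\geq 3$ be odd and $\lambda=2\cos(\pi/q)$. Elements of $\mathrm{PGL}_2(\mathbb{R})$ act on $\mathbb{R}\cup\{\infty\}$ by $\begin{bmatrix}a&b\\c&d\end{bmatrix}.x=(ax+b)/(cx+d)$. Put $s(x)=\sin(x\pi/q)/\sin(\pi/q)$, $g_k=\begin{bmatrix}s(k)&-s(k+1)\\-s(k-1)&s(k)\end{bmatrix}$, $Q=\begin{bmatrix}0&1\\1&0\end{bmatrix}$, $K=\{(q+1)/2,\dots,q-1\}$. For $g\in\mathrm{PGL}_2(\mathbb{R})$ and a function $f$, set $\tau(g)f(x)=|(g^{-1})'(x)|\,f(g^{-1}.x)$, where $(g^{-1})'$ is the derivative of $x\mapsto g^{-1}.x$. The Perron–Frobenius operator is $\mathcal{P}_q=\sum_{k\in K}\big(\tau(g_k)+\tau(Qg_k)\big)$ (it is the transfer operator of the generalized Farey map with respect to Lebesgue measure). *)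

(* Defs.v *)
From Stdlib Require Import Reals List Arith.
From Coquelicot Require Import Coquelicot.
Open Scope R_scope.

Record mat2 := Mat2 { ma : R; mb : R; mc : R; md : R }.

Definition mat_mul (g h : mat2) : mat2 :=
  Mat2 (ma g * ma h + mb g * mc h) (ma g * mb h + mb g * md h)
       (mc g * ma h + md g * mc h) (mc g * mb h + md g * md h).

Definition mat_det (g : mat2) : R := ma g * md g - mb g * mc g.

Definition mat_inv (g : mat2) : mat2 :=
  let D := mat_det g in
  Mat2 (md g / D) (- mb g / D) (- mc g / D) (ma g / D).

Definition act (g : mat2) (x : R) : R := (ma g * x + mb g) / (mc g * x + md g).

Definition tau (g : mat2) (f : R -> R) (x : R) : R :=
  Rabs (Derive (fun y => act (mat_inv g) y) x) * f (act (mat_inv g) x).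

Definition s (q : nat) (x : R) : R := sin (x * PI / INR q) / sin (PI / INR q).

Definition gk (q k : nat) : mat2 :=
  Mat2 (s q (INR k)) (- s q (INR k + 1)) (- s q (INR k - 1)) (s q (INR k)).

Definition Qm : mat2 := Mat2 0 1 1 0.

(* K = {(q+1)/2, ..., q-1} *)
Definition Kset (q : nat) : list nat := seq ((q + 1) / 2) ((q - 1) / 2).

Definition PF (q : nat) (f : R -> R) (x : R) : R :=
  fold_right (fun k acc => tau (gk q k) f x + tau (mat_mul Qm (gk q k)) f x + acc)
    0 (Kset q).

Definition h (x : R) : R := / x.

(* Main.v *)
Require Import Defs.
From Stdlib Require Import Reals Arith Lra Lia.
From Coquelicot Require Import Coquelicot.
Open Scope R_scope.

Lemma derive_act a b c d x : c*x+d <> 0 ->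
  Derive (fun y => (a*y+b)/(c*y+d)) x = (a*d-b*c)/(c*x+d)^2.
Proof.
  intro H. apply is_derive_unique. auto_derive; [exact H|]. field. exact H.
Qed.

Lemma tau_h g a b c d x : mat_inv g = Mat2 a b c d ->
  (a*d-b*c = 1 \/ a*d-b*c = -1) -> 0 < c*x+d -> 0 < a*x+b ->
  tau g h x = / ((c*x+d)*(a*x+b)).
Proof.
  intros E Hd Hc Ha. unfold tau. rewrite E. unfold act; simpl.
  rewrite derive_act by lra. unfold h.
  assert (Rabs ((a*d-b*c)/(c*x+d)^2) = /(c*x+d)^2) as ->.
  { destruct Hd as [Hd|Hd]; rewrite Hd.
    - rewrite Rabs_pos_eq. field. lra. apply Rlt_le. apply Rdiv_lt_0_compat; [lra|]. nra.
    - replace (-1/(c*x+d)^2) with (-(/(c*x+d)^2)) by (field; lra).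
      rewrite Rabs_Ropp, Rabs_pos_eq. reflexivity. apply Rlt_le, Rinv_0_lt_compat. nra. }
  field. lra.
Qed.

Lemma sin_sq_id a b : sin a * sin a - sin (a+b) * sin (a-b) = sin b * sin b.
Proof.
  rewrite sin_plus, sin_minus.
  pose proof (sin2_cos2 a). pose proof (sin2_cos2 b). unfold Rsqr in *. nra.
Qed.

Lemma INRq_pos q : (3 <= q)%nat -> 3 <= INR q.
Proof. intro H. apply le_INR in H. simpl in H. lra. Qed.

Lemma sinth_pos q : (3 <= q)%nat -> 0 < sin (PI / INR q).
Proof.
  intro H. pose proof (INRq_pos q H). pose proof PI_RGT_0.
  apply sin_gt_0. apply Rdiv_lt_0_compat; lra.
  apply Rmult_lt_reg_r with (INR q). lra. unfold Rdiv. rewrite Rmult_assoc, Rinv_l by lra. nra.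
Qed.

Lemma s_det q r : (3 <= q)%nat -> s q r * s q r - s q (r+1) * s q (r-1) = 1.
Proof.
  intro H. pose proof (sinth_pos q H). pose proof (INRq_pos q H). unfold s.
  pose proof (sin_sq_id (r*PI/INR q) (PI/INR q)).
  replace ((r+1)*PI/INR q) with (r*PI/INR q + PI/INR q) by (field; lra).
  replace ((r-1)*PI/INR q) with (r*PI/INR q - PI/INR q) by (field; lra).
  set (A := sin (r*PI/INR q)) in *. set (S := sin (PI/INR q)) in *.
  set (B := sin (r*PI/INR q + PI/INR q)) in *. set (C := sin (r*PI/INR q - PI/INR q)) in *.
  replace (A/S*(A/S) - B/S*(C/S)) with ((A*A-B*C)/(S*S)) by (field; lra).
  rewrite H2. field. lra.
Qed.

Lemma s_pos q r : (3 <= q)%nat -> 0 < r < INR q -> 0 < s q r.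
Proof.
  intros H Hr. pose proof (sinth_pos q H). pose proof (INRq_pos q H). pose proof PI_RGT_0.
  unfold s. apply Rdiv_lt_0_compat; auto. apply sin_gt_0.
  apply Rdiv_lt_0_compat; nra.
  apply Rmult_lt_reg_r with (INR q). lra. unfold Rdiv. rewrite Rmult_assoc, Rinv_l by lra. nra.
Qed.

Lemma s_nonneg q r : (3 <= q)%nat -> 0 <= r <= INR q -> 0 <= s q r.
Proof.
  intros H Hr. pose proof (sinth_pos q H). pose proof (INRq_pos q H). pose proof PI_RGT_0.
  unfold s. apply Rmult_le_pos; [|apply Rlt_le, Rinv_0_lt_compat; auto]. apply sin_ge_0.
  apply Rmult_le_pos; [nra|apply Rlt_le, Rinv_0_lt_compat; lra].
  apply Rmult_le_reg_r with (INR q). lra. unfold Rdiv. rewrite Rmult_assoc, Rinv_l by lra. nra.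
Qed.

Lemma s_q q : (3 <= q)%nat -> s q (INR q) = 0.
Proof.
  intros H. pose proof (INRq_pos q H). unfold s.
  replace (INR q * PI / INR q) with PI by (field; lra). rewrite sin_PI. unfold Rdiv. ring.
Qed.

Lemma s_sym q r : (3 <= q)%nat -> s q (INR q - r) = s q r.
Proof.
  intros H. pose proof (INRq_pos q H). unfold s.
  replace ((INR q - r) * PI / INR q) with (PI - r*PI/INR q) by (field; lra). rewrite sin_PI_x. reflexivity.
Qed.

Lemma inv_gk q k : (3 <= q)%nat ->
  mat_inv (gk q k) = Mat2 (s q (INR k)) (s q (INR k + 1)) (s q (INR k - 1)) (s q (INR k)).
Proof.
  intro H. unfold mat_inv, mat_det, gk; simpl.
  pose proof (s_det q (INR k) H).
  replace (s q (INR k) * s q (INR k) - - s q (INR k + 1) * - s q (INR k - 1)) with 1 by lra.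
  f_equal; field.
Qed.

Lemma inv_Qgk q k : (3 <= q)%nat ->
  mat_inv (mat_mul Qm (gk q k)) = Mat2 (s q (INR k + 1)) (s q (INR k)) (s q (INR k)) (s q (INR k - 1)).
Proof.
  intro H. unfold mat_inv, mat_det, gk, mat_mul, Qm; simpl.
  pose proof (s_det q (INR k) H).
  match goal with |- context [?D] => match D with (_ * _ - _ * _) => 
    replace D with (-1) by lra end end.
  f_equal; field.
Qed.


Lemma telesc (t H : nat -> R) n m :
  (forall k, (m <= k < m + n)%nat -> t k = H k - H (S k)) ->
  List.fold_right (fun k acc => t k + acc) 0 (List.seq m n) = H m - H (m + n)%nat.
Proof.
  revert m. induction n as [|n IH]; intros m Ht; simpl.
  - rewrite Nat.add_0_r. ring.
  - rewrite IH. rewrite Ht by lia. replace (m + S n)%nat with (S m + n)%nat by lia. ring.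
    intros k Hk. apply Ht. lia.
Qed.

Lemma alg a b c x : b*b - c*a = 1 -> 0 < x -> 0 < a*x+b -> 0 < b*x+c -> 0 < b*x+a -> 0 < c*x+b ->
  /((a*x+b)*(b*x+c)) + /((b*x+a)*(c*x+b)) =
  (b/(a*x+b) - a/(b*x+a))/x - (c/(b*x+c) - b/(c*x+b))/x.
Proof.
  intros E Hx H1 H2 H3 H4.
  assert (b/(a*x+b) - c/(b*x+c) = x*(b*b-c*a)/((a*x+b)*(b*x+c))) as E1 by (field; lra).
  assert (b/(c*x+b) - a/(b*x+a) = x*(b*b-c*a)/((b*x+a)*(c*x+b))) as E2 by (field; lra).
  replace ((b/(a*x+b) - a/(b*x+a))/x - (c/(b*x+c) - b/(c*x+b))/x)
    with ((b/(a*x+b) - c/(b*x+c))/x + (b/(c*x+b) - a/(b*x+a))/x) by (field; lra).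
  rewrite E1, E2, E. field. repeat split; lra.
Qed.

Theorem proposition2p6 (q : nat) (hq3 : (3 <= q)%nat) (hqodd : Nat.Odd q) :
  forall x : R, 0 < x <= 1 -> PF q h x = h x.
Proof.
  intros x [Hx _]. destruct hqodd as [j Hj].
  assert (Hm : ((q + 1) / 2 = j + 1)%nat).
  { subst q. replace (2*j+1+1)%nat with ((j+1)*2)%nat by lia. apply Nat.div_mul. lia. }
  assert (Hn : ((q - 1) / 2 = j)%nat).
  { subst q. replace (2*j+1-1)%nat with (j*2)%nat by lia. apply Nat.div_mul. lia. }
  set (S' := fun r => s q r).
  set (F := fun k : nat => s q (INR k) / (s q (INR k - 1) * x + s q (INR k))).
  set (G := fun k : nat => s q (INR k - 1) / (s q (INR k) * x + s q (INR k - 1))).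
  unfold PF, Kset. rewrite Hm, Hn.
  rewrite (telesc _ (fun k => (F k - G k)/x)).
  2:{ intros k Hk.
      assert (Hk2 : 2 <= INR k) by (replace 2 with (INR 2) by (simpl; ring); apply le_INR; lia).
      assert (Hkq : INR k + 1 <= INR q) by (rewrite <- S_INR; apply le_INR; lia).
      pose proof (INRq_pos q hq3).
      assert (Pa : 0 < s q (INR k - 1)) by (apply s_pos; auto; lra).
      assert (Pb : 0 < s q (INR k)) by (apply s_pos; auto; lra).
      assert (Pc : 0 <= s q (INR k + 1)) by (apply s_nonneg; auto; lra).
      pose proof (s_det q (INR k) hq3).
      rewrite (tau_h _ _ _ _ _ x (inv_gk q k hq3)); [| left; lra | nra | nra].
      rewrite (tau_h _ _ _ _ _ x (inv_Qgk q k hq3)); [| right; lra | nra | nra].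
      unfold F, G. rewrite S_INR. replace (INR k + 1 - 1) with (INR k) by ring.
      apply alg; try lra; nra. }
  replace (j + 1 + j)%nat with q by lia.
  unfold F, G, h.
  rewrite s_q by auto.
  pose proof (INRq_pos q hq3).
  assert (Hq1 : 0 < s q (INR q - 1)) by (apply s_pos; auto; lra).
  assert (Em : s q (INR (j+1) - 1) = s q (INR (j+1))).
  { rewrite <- (s_sym q (INR (j+1))) by auto. f_equal. subst q.
    rewrite !plus_INR, !mult_INR. simpl. ring. }
  rewrite Em.
  assert (Pm : 0 < s q (INR (j+1))).
  { apply s_pos; auto. split. rewrite plus_INR; simpl; pose proof (pos_INR j); lra.
    apply lt_INR; lia. }
  field. repeat split; nra.
Qed.
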